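(* For a coloured integer $k_x$, let $G_{k_x}(a,b,q)=\sum a^{u}b^{v}q^{n}$, the sum running over all admissible coloured partitions (including the empty one) whose largest part $\lambda_1$ satisfies $\lambda_1\le k_x$ in the total order of coloured integers, where $n,u,v$ are the size and the two weights of the partition. Then for all integers $k \geq 1$, as formal power series, \begin{align*} G_{(2k+1)_{ab}}(a,b,q) &= (1+aq)\, G_{(2k)_{a}}(b,aq,q),\\ G_{(2k+1)_{b^2}}(a,b,q) &= (1+aq)\, G_{(2k)_{b}}(b,aq,q),\\ G_{(2k+2)_{ab}}(a,b,q) &= (1+aq)\, G_{(2k+1)_{a}}(b,aq,q),\\ G_{(2k+1)_{a^2}}(a,b,q) &= (1+aq)\, G_{(2k-1)_{b}}(b,aq,q). \end{align*}
   Context: Coloured integers: every positive integer $k$ occurs in the three colours $a$, $b$, $ab$ (written $k_a$, $k_b$, $k_{ab}$). In addition, odd positive integers occur in the colours $a^2$ and $b^2$: $k_{b^2}$ for every odd $k\ge 1$ and $k_{a^2}$ for every odd $k \geq 3$. The integer value of $k_x$ is $k$ and its colour is $x$. These coloured integers are totally ordered by $$1_{ab} < 1_a < 1_{b^2} <1_{b} <2_{ab} < 2_a <3_{a^2} < 2_{b} <3_{ab} < 3_a < 3_{b^2} <3_b <4_{ab}<4_a<5_{a^2}<4_b<5_{ab}<\cdots,$$ that is, for every odd $m\ge1$: $m_{ab}<m_a<m_{b^2}<m_b<(m+1)_{ab}<(m+1)_a<(m+2)_{a^2}<(m+1)_b<(m+2)_{ab}$. Difference conditions: for a coloured integer $\lambda$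 (the ''upper'' part) of colour $x$ and a coloured integer $\mu$ (the ''lower'' part) of colour $y$, a minimal difference $A(\lambda,\mu)$ is defined as follows, where the row is determined by the colour and the parity of the integer value of $\lambda$, and the entries are listed for $y = a, b, ab, a^2, b^2$ in this order: - $\lambda$ of colour $a$, odd: $2,2,1,2,2$; - $\lambda$ of colour $b^2$: $2,3,2,2,4$; - $\lambda$ of colour $b$, odd: $1,2,1,2,2$; - $\lambda$ of colour $ab$, even: $2,2,2,3,3$; - $\lambda$ of colour $a$, even: $2,2,2,3,3$; - $\lambda$ of colour $a^2$: $3,3,3,4,4$; - $\lambda$ of colour $b$, even: $1,2,1,1,3$; - $\lambda$ of colour $ab$, odd: $2,3,2,2,3$. An admissible coloured partition is a finite (possibly empty) sequence $\lambda_1,\dots,\lambda_s$ of coloured integers, none of which equals $1_{ab}$ or $1_{b^2}$, such that for every $1\le i<s$ the integer values satisfy $\lambda_i-\lambda_{i+1}\ge A(\lambda_i,\lambda_{i+1})$. Its size $n$ is the sum of the integer values of its parts. Its weight $u$ is the number of parts of colour $a$ or $ab$ plus twice the number of parts of colour $a^2$; its weight $v$ is the number of parts of colour $b$ or $ab$ plus twice the number of parts of colour $b^2$. *)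

(* Defs.v *)
From mathcomp Require Import all_boot.
Set Implicit Arguments. Unset Strict Implicit. Unset Printing Implicit Defensive.

Inductive colour := Ca | Cb | Cab | Ca2 | Cb2.

Definition cint := (nat * colour)%type.

Definition cvalid (x : cint) : bool :=
  let: (k, c) := x in
  match c with
  | Ca | Cb | Cab => 0 < k
  | Cb2 => odd k
  | Ca2 => odd k && (3 <= k)
  end.

(* Position of a coloured integer in the total order
   1_ab < 1_a < 1_b2 < 1_b < 2_ab < 2_a < 3_a2 < 2_b < 3_ab < ... :
   k_ab |-> 4k-4, k_a |-> 4k-3, k_b2 |-> 4k-2, k_b |-> 4k-1, k_a2 |-> 4k-6. *)
Definition crank (x : cint) : nat :=
  let: (k, c) := x in
  match c with
  | Cab => 4 * k - 4
  | Ca => 4 * k - 3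
  | Cb2 => 4 * k - 2
  | Cb => 4 * k - 1
  | Ca2 => 4 * k - 6
  end.

Definition cle (x y : cint) : bool := crank x <= crank y.

(* Minimal difference A(lambda, mu): row given by colour/parity of lambda,
   column by colour of mu (in the order a, b, ab, a^2, b^2). *)
Definition row (r1 r2 r3 r4 r5 : nat) (c : colour) : nat :=
  match c with Ca => r1 | Cb => r2 | Cab => r3 | Ca2 => r4 | Cb2 => r5 end.

Definition Adiff (l m : cint) : nat :=
  let: (k, c) := l in
  let: (_, d) := m in
  match c with
  | Ca  => if odd k then row 2 2 1 2 2 d else row 2 2 2 3 3 d
  | Cb2 => row 2 3 2 2 4 d
  | Cb  => if odd k then row 1 2 1 2 2 d else row 1 2 1 1 3 d
  | Cab => if odd k then row 2 3 2 2 3 d else row 2 2 2 3 3 d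
  | Ca2 => row 3 3 3 4 4 d
  end.

Definition not_excluded (x : cint) : bool :=
  let: (k, c) := x in
  match c with
  | Cab | Cb2 => k != 1
  | _ => true
  end.

Definition admissible (s : seq cint) : bool :=
  all cvalid s && all not_excluded s &&
  sorted (fun l m : cint => m.1 + Adiff l m <= l.1) s.

Definition psize (s : seq cint) : nat := sumn (map fst s).

Definition ua (c : colour) : nat :=
  match c with Ca | Cab => 1 | Ca2 => 2 | _ => 0 end.
Definition vb (c : colour) : nat :=
  match c with Cb | Cab => 1 | Cb2 => 2 | _ => 0 end.

Definition weight_u (s : seq cint) : nat := sumn (map (fun x => ua x.2) s).
Definition weight_v (s : seq cint) : nat := sumn (map (fun x => vb x.2) s).

Definition bounded_by (kx : cint) (s : seq cint) : bool :=
  if s is x :: _ then cle x kx else true.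

Definition cands (n : nat) : seq cint :=
  flatten [seq [:: (k, Ca); (k, Cb); (k, Cab); (k, Ca2); (k, Cb2)] | k <- iota 1 n].

Fixpoint seqs_len (l : nat) (L : seq cint) : seq (seq cint) :=
  if l is l'.+1 then [seq x :: s | x <- L, s <- seqs_len l' L] else [:: [::]].

Definition seqs_upto (n : nat) (L : seq cint) : seq (seq cint) :=
  flatten [seq seqs_len l L | l <- iota 0 n.+1].

(* Trivariate formal power series in a, b, q with coefficients in nat:
   f i j n is the coefficient of a^i b^j q^n. *)
Definition fps := nat -> nat -> nat -> nat.

Definition fps_mul (f g : fps) : fps := fun i j n =>
  \sum_(i1 < i.+1) \sum_(j1 < j.+1) \sum_(n1 < n.+1)
     f i1 j1 n1 * g (i - i1) (j - j1) (n - n1).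

Definition one_plus_aq : fps := fun i j n =>
  ((i == 0) && (j == 0) && (n == 0)) + ((i == 1) && (j == 0) && (n == 1)).

(* F(a,b,q) |-> F(b, a q, q):  a^u b^v q^n |-> b^u a^v q^(n+v). *)
Definition subst_b_aq_q (F : fps) : fps := fun i j n =>
  if i <= n then F j i (n - i) else 0.

Definition G (kx : cint) : fps := fun u v n =>
  count (fun s => [&& admissible s, bounded_by kx s, psize s == n,
                      weight_u s == u & weight_v s == v])
        (seqs_upto n (cands n)).

(* Main.v *)
From HB Require Import structures.
Require Import Defs.
From mathcomp Require Import all_boot zify.
From Stdlib Require Import Btauto FunctionalExtensionality.
Set Implicit Arguments. Unset Strict Implicit. Unset Printing Implicit Defensive.


Definition c2n (c : colour) : nat :=
  match c with Ca => 0 | Cb => 1 | Cab => 2 | Ca2 => 3 | Cb2 => 4 end.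
Definition n2c (n : nat) : colour :=
  match n with 0 => Ca | 1 => Cb | 2 => Cab | 3 => Ca2 | _ => Cb2 end.
Lemma c2nK : cancel c2n n2c. Proof. by case. Qed.
HB.instance Definition _ := Equality.copy colour (can_type c2nK).

Definition E (n : nat) := seqs_upto n (cands n).

Lemma uniq_cands n : uniq (cands n).
Proof.
have -> : cands n = [seq (k, c) | k <- iota 1 n, c <- [:: Ca; Cb; Cab; Ca2; Cb2]] by [].
apply: allpairs_uniq; first exact: iota_uniq; first by [].
by move=> [x1 y1] [x2 y2] _ _ /= [-> ->].
Qed.

Lemma mem_cands n (x : cint) : 0 < x.1 <= n -> x \in cands n.
Proof.
move: x => [k c] /= Hk.
have -> : cands n = [seq (k, c) | k <- iota 1 n, c <- [:: Ca; Cb; Cab; Ca2; Cb2]] by [].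
apply: allpairs_f; first by rewrite mem_iota; lia.
by case: c.
Qed.

Lemma seqs_len_uniq l (L : seq cint) : uniq L -> uniq (seqs_len l L).
Proof.
move=> UL; elim: l => [|l IH] //=.
apply: allpairs_uniq => //.
by move=> [x1 y1] [x2 y2] _ _ /= [-> ->].
Qed.

Lemma seqs_len_size l (L : seq cint) s : s \in seqs_len l L -> size s = l.
Proof.
elim: l s => [|l IH] s /=; first by rewrite inE => /eqP ->.
by case/allpairsP => [[x y] [_ /IH Hy ->]] /=; rewrite Hy.
Qed.

Lemma mem_seqs_len (L : seq cint) s : all (mem L) s -> s \in seqs_len (size s) L.
Proof.
elim: s => [|x s IH] /=; first by rewrite inE.
case/andP => Hx Hs; exact: (allpairs_f (fun x s => x :: s) Hx (IH Hs)).
Qed.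

Lemma uniq_flat_len (L : seq cint) m k :
  uniq L -> uniq (flatten [seq seqs_len l L | l <- iota m k]).
Proof.
move=> UL; elim: k m => [|k IH] m //=.
rewrite cat_uniq seqs_len_uniq // IH andbT.
apply/hasP => [[s /flatten_mapP [l]]]; rewrite mem_iota => Hl /seqs_len_size Hs.
by move/seqs_len_size; lia.
Qed.

Lemma uniq_E n : uniq (E n).
Proof. exact/uniq_flat_len/uniq_cands. Qed.

Definition good (x : cint) := cvalid x && not_excluded x.

Lemma good_pos x : good x -> 0 < x.1.
Proof. by move: x => [k [] ] /andP [] /=; lia. Qed.

Lemma adm_good s : admissible s -> all good s.
Proof.
rewrite /admissible => /andP [/andP [H1 H2] _].
elim: s H1 H2 => //= x s IH /andP [a1 a2] /andP [b1 b2].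
by rewrite /good a1 b1 IH.
Qed.

Lemma size_psize s : all good s -> size s <= psize s.
Proof.
elim: s => //= x s IH /andP [/good_pos H1 H2]; move: (IH H2); rewrite /psize /=. lia.
Qed.

Lemma part_le_psize s : all (fun x : cint => x.1 <= psize s) s.
Proof.
elim: s => //= x s IH; rewrite /psize /= leq_addr /=.
apply/allP => y Hy; move/allP: IH => /(_ y Hy). rewrite /psize; lia.
Qed.

Lemma mem_E s n : admissible s -> psize s = n -> s \in E n.
Proof.
move=> Ha Hn; have Hg := adm_good Ha.
rewrite /E /seqs_upto; apply/flattenP; exists (seqs_len (size s) (cands n)).
  apply: (map_f (fun l => seqs_len l (cands n))); rewrite mem_iota; move: (size_psize Hg); lia.
apply: mem_seqs_len; apply/allP => x Hx; apply: mem_cands.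
move/allP: Hg => /(_ x Hx) /good_pos ->.
by move/allP: (part_le_psize s) => /(_ x Hx); rewrite Hn.
Qed.


Definition Rl (l m : cint) : bool := m.1 + Adiff l m <= l.1.
Definition headP (P : pred cint) (s : seq cint) : bool :=
  if s is x :: _ then P x else true.

Lemma adm_cons x s : admissible (x :: s) = [&& good x, headP (Rl x) s & admissible s].
Proof.
rewrite /admissible /good /=; case: s => [|y s] /=; first by btauto.
rewrite /Rl; btauto.
Qed.

Definition fadd (F G : fps) : fps := fun i j n => F i j n + G i j n.
Definition fzero : fps := fun _ _ _ => 0.
Definition E0 : fps := fun u v n => ((u == 0) && (v == 0) && (n == 0) : nat).

Definition Cnt (P : pred cint) : fps := fun u v n =>
  count (fun s => [&& admissible s, headP P s, psize s == n,
                      weight_u s == u & weight_v s == v]) (E n).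
Definition Cn (P : pred cint) : fps := fun u v n =>
  count (fun s => [&& admissible s, headP P s, psize s == n,
                      weight_u s == u & weight_v s == v] && (0 < size s)) (E n).

Lemma fps_ext (F G : fps) : (forall i j n, F i j n = G i j n) -> F = G.
Proof. move=> H; do 3 (apply: functional_extensionality => ?); exact: H. Qed.

Lemma count_split T (a b : pred T) l :
  count a l = count (fun x => a x && ~~ b x) l + count (fun x => a x && b x) l.
Proof. elim: l => //= x l ->; case: (a x); case: (b x) => /=; lia. Qed.

Lemma count_false T (a : pred T) l : (forall x, a x = false) -> count a l = 0.
Proof. move=> H; rewrite (eq_count H); exact: count_pred0. Qed.

Lemma count_and_const (T : eqType) (y : T) (b : bool) l :
  count (fun x => (x == y) && b) l = b * count_mem y l.
Proof. elim: l => [|x l IH]; first by rewrite /= muln0. rewrite /= {}IH; case: (x == y); case: b => /=; lia. Qed.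

Lemma Cnt_split P : Cnt P = fadd E0 (Cn P).
Proof.
apply: fps_ext => u v n; rewrite /Cnt /Cn /fadd.
rewrite (count_split _ (fun s : seq cint => 0 < size s)); congr (_ + _).

transitivity (count (fun s => (s == [::]) && (E0 u v n != 0)) (E n)).
  apply: eq_count => s; case: s => [|x s] /=; last by rewrite andbF.
  rewrite /E0 /admissible /psize /weight_u /weight_v /=.
  by case: u; case: v; case: n.
rewrite count_and_const; case H0: (E0 u v n != 0); last by move/negbFE/eqP: H0 => ->.
rewrite count_uniq_mem ?uniq_E // mem_E //; first by move: H0; rewrite /E0; case: (_ && _).
by move: H0; rewrite /E0; case: u; case: v; case: n.
Qed.

Lemma Cn_ext P P' : (forall x, good x -> P x = P' x) -> Cn P = Cn P'.
Proof.
move=> H; apply: fps_ext => u v n; apply: eq_count => -[|x s] //=.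
rewrite adm_cons; case Hg: (good x) => //=; by rewrite H.
Qed.

Lemma Cnt_ext P P' : (forall x, good x -> P x = P' x) -> Cnt P = Cnt P'.
Proof. by move=> H; rewrite !Cnt_split (Cn_ext H). Qed.

Lemma Cn_false P : (forall x, good x -> P x = false) -> Cn P = fzero.
Proof.
move=> H; apply: fps_ext => u v n; apply: count_false => -[|x s] /=; first by rewrite andbF.
rewrite adm_cons; case Hg: (good x) => //=; by rewrite H //= ?andbF.
Qed.

Lemma Cnt_false P : (forall x, good x -> P x = false) -> Cnt P = E0.
Proof.
move=> H; rewrite Cnt_split (Cn_false H); apply: fps_ext => u v n; rewrite /fadd /fzero; lia.
Qed.

Lemma Cn_or P Q : (forall x, good x -> ~~ (P x && Q x)) ->
  Cn (fun x => P x || Q x) = fadd (Cn P) (Cn Q).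
Proof.
move=> H; apply: fps_ext => u v n; rewrite /fadd /Cn -count_predUI.
rewrite [X in _ = _ + X]count_false ?addn0.
  apply: eq_count => -[|x s] /=; first by rewrite !andbF.
  btauto.
move=> [|x s] /=; first by rewrite !andbF.
rewrite adm_cons; case Hg: (good x) => //=; move: (H x Hg).
by case: (P x); case: (Q x); rewrite /= ?andbF.
Qed.


Lemma count_bij (T1 T2 : eqType) (l1 : seq T1) (l2 : seq T2) (P : pred T1) (Q : pred T2)
  (f : T2 -> T1) : uniq l1 -> uniq l2 -> (forall y, Q y -> y \in l2) ->
  (forall x, P x -> x \in l1) -> (forall y1 y2, Q y1 -> Q y2 -> f y1 = f y2 -> y1 = y2) ->
  (forall y, Q y -> P (f y)) -> (forall x, P x -> exists y, Q y /\ f y = x) ->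
  count P l1 = count Q l2.
Proof.
move=> U1 U2 M2 M1 Inj PQ QP; rewrite -!size_filter.
have -> : size (filter Q l2) = size (map f (filter Q l2)) by rewrite size_map.
apply: perm_size; apply: uniq_perm; first exact: filter_uniq.
  rewrite map_inj_in_uniq ?filter_uniq //.
  by move=> y1 y2; rewrite !mem_filter => /andP [H1 _] /andP [H2 _]; apply: Inj.
move=> x; rewrite mem_filter; apply/idP/idP.
  case/andP => Px _; case: (QP x Px) => y [Qy <-].
  by apply: map_f; rewrite mem_filter Qy M2.
case/mapP => y; rewrite mem_filter => /andP [Qy _] ->.
by rewrite PQ // M1 // PQ.
Qed.

Definition sh (a b m : nat) (F : fps) : fps := fun i j n =>
  if (a <= i) && (b <= j) && (m <= n) then F (i - a) (j - b) (n - m) else 0.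

Lemma count_andb_const T (p : pred T) (b : bool) l :
  count (fun x => p x && b) l = if b then count p l else 0.
Proof. case: b; last by apply: count_false => x; rewrite andbF.
by apply: eq_count => x; rewrite andbT. Qed.

Lemma crank_inj x y : good x -> good y -> crank x = crank y -> x = y.
Proof.
move: x y => [k c] [k' c']; rewrite /good.
case: c; case: c' => /=; rewrite ?andbT => H1 H2 Hr;
  try (have -> : k = k' by lia); try done; try lia.

Qed.

Lemma Dq_formula (l : cint) : good l ->
  Cn (fun x => crank x == crank l) = sh (ua l.2) (vb l.2) l.1 (Cnt (Rl l)).
Proof.
move=> Gl; apply: fps_ext => u v n; rewrite /sh /Cn /Cnt.
rewrite -count_andb_const.
apply: (count_bij (f := cons l)); rewrite ?uniq_E //.
- move=> y /andP [/and5P [Ha _ /eqP Hp _ _] _]; exact: mem_E.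
- move=> x /andP [/and5P [Ha _ /eqP Hp _ _] _]; exact: mem_E.
- by move=> y1 y2 _ _ [].
- move=> y /andP [/and5P [Ha Hh /eqP Hp /eqP Hu /eqP Hv] /andP [/andP [h1 h2] h3]].
  rewrite /= adm_cons Gl Hh Ha eqxx /=.
  rewrite /psize /weight_u /weight_v /= -/(psize y) -/(weight_u y) -/(weight_v y).
  rewrite Hp Hu Hv; lia.
- move=> [|x s] /=; first by rewrite andbF.
  rewrite adm_cons andbT => /and5P [/and3P [Gx Hh Ha] /eqP Hc /eqP Hp /eqP Hu /eqP Hv].
  have Ex := crank_inj Gx Gl Hc; subst x.
  exists s; split=> //.
  move: Hp Hu Hv; rewrite /psize /weight_u /weight_v /= -/(psize s) -/(weight_u s) -/(weight_v s).
  move=> Hp Hu Hv; rewrite Ha Hh /=.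
  apply/andP; split; first (apply/and3P; split; apply/eqP; lia).
  lia.
Qed.


Lemma sum_delta N c (g : nat -> nat) :
  \sum_(x < N) (((x : nat) == c) * g x) = (c < N) * g c.
Proof.
elim: N => [|N IH]; first by rewrite big_ord0.
rewrite big_ord_recr /= IH.
case: eqP => [E|E].
  by rewrite /= -E ltnn ltnSn /= add0n.
rewrite mul0n addn0 ltnS [c <= N]leq_eqVlt.
by case: eqP => // E'; exfalso; apply: E; rewrite E'.
Qed.



Lemma sum_pull N a (F : 'I_N -> nat) : \sum_(x < N) (a * F x) = a * \sum_(x < N) F x.
Proof. by rewrite big_distrr. Qed.

Lemma sum3_split I J K (A B : 'I_I -> 'I_J -> 'I_K -> nat) :
  \sum_(i1 < I) \sum_(j1 < J) \sum_(n1 < K) (A i1 j1 n1 + B i1 j1 n1) =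
  \sum_(i1 < I) \sum_(j1 < J) \sum_(n1 < K) A i1 j1 n1 +
  \sum_(i1 < I) \sum_(j1 < J) \sum_(n1 < K) B i1 j1 n1.
Proof.
rewrite -big_split; apply: eq_bigr => i1 _.
rewrite -big_split; apply: eq_bigr => j1 _.
by rewrite -big_split.
Qed.

Lemma sum_delta3 I J K c1 c2 c3 (F : nat -> nat -> nat -> nat) :
  \sum_(i1 < I) \sum_(j1 < J) \sum_(n1 < K)
     (((i1 : nat) == c1) * (((j1 : nat) == c2) * (((n1 : nat) == c3) * F i1 j1 n1))) =
  (c1 < I) * ((c2 < J) * ((c3 < K) * F c1 c2 c3)).
Proof.
rewrite (eq_bigr (fun i1 : 'I_I => ((i1 : nat) == c1) * ((c2 < J) * ((c3 < K) * F i1 c2 c3)))).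
  by rewrite (sum_delta _ _ (fun i1 => (c2 < J) * ((c3 < K) * F i1 c2 c3))).
move=> i1 _.
transitivity (\sum_(j1 < J) ((i1 : nat) == c1) * (((j1 : nat) == c2) * ((c3 < K) * F i1 j1 c3))).
  apply: eq_bigr => j1 _.
  rewrite sum_pull sum_pull.
  by rewrite (sum_delta _ _ (fun n1 => F i1 j1 n1)).
rewrite sum_pull; congr (_ * _).
by rewrite (sum_delta _ _ (fun j1 => (c3 < K) * F i1 j1 c3)).
Qed.

Lemma fps_mul_opa (X : fps) : fps_mul one_plus_aq X = fadd X (sh 1 0 1 X).
Proof.
apply: fps_ext => i j n; rewrite /fps_mul /fadd /sh.
have E1 : forall (i1 j1 n1 : nat) Y, one_plus_aq i1 j1 n1 * Y =
   (i1 == 0) * ((j1 == 0) * ((n1 == 0) * Y)) + (i1 == 1) * ((j1 == 0) * ((n1 == 1) * Y)).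
  move=> i1 j1 n1 Y; rewrite /one_plus_aq.
  case: i1 => [|[|i1]]; case: j1 => [|j1]; case: n1 => [|[|n1]];
    rewrite /= ?mul0n ?mul1n ?add0n ?addn0 //.
transitivity (\sum_(i1 < i.+1) \sum_(j1 < j.+1) \sum_(n1 < n.+1)
   ((((i1 : nat) == 0) * (((j1 : nat) == 0) * (((n1 : nat) == 0) * X (i - i1) (j - j1) (n - n1))))
  + (((i1 : nat) == 1) * (((j1 : nat) == 0) * (((n1 : nat) == 1) * X (i - i1) (j - j1) (n - n1)))))).
  apply: eq_bigr => i1 _; apply: eq_bigr => j1 _; apply: eq_bigr => n1 _; exact: E1.
rewrite sum3_split.
rewrite (@sum_delta3 _ _ _ _ _ _ (fun i1 j1 n1 => X (i - i1) (j - j1) (n - n1))).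
rewrite (@sum_delta3 _ _ _ _ _ _ (fun i1 j1 n1 => X (i - i1) (j - j1) (n - n1))).
rewrite !subn0 !ltnS /=.
by case: i => [|i]; case: n => [|n] //=; rewrite ?mul1n ?muln0 ?addn0.
Qed.

Definition Tf (F : fps) : fps := fps_mul one_plus_aq (subst_b_aq_q F).

Ltac fcases := rewrite /sh /subst_b_aq_q /fadd /E0 /fzero;
  repeat (case: ifP => ?); try lia; try (f_equal; lia).

Lemma subst_add F G : subst_b_aq_q (fadd F G) = fadd (subst_b_aq_q F) (subst_b_aq_q G).
Proof. apply: fps_ext => i j n; fcases. Qed.

Lemma subst_sh a b m m' F : m' = m + b ->
  subst_b_aq_q (sh a b m F) = sh b a m' (subst_b_aq_q F).
Proof. move=> ->; apply: fps_ext => i j n; fcases. Qed.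

Lemma sh_add a b m F G : sh a b m (fadd F G) = fadd (sh a b m F) (sh a b m G).
Proof. apply: fps_ext => i j n; fcases. Qed.

Lemma sh_sh a b m a' b' m' a'' b'' m'' F : a'' = a + a' -> b'' = b + b' -> m'' = m + m' ->
  sh a b m (sh a' b' m' F) = sh a'' b'' m'' F.
Proof. move=> -> -> ->; apply: fps_ext => i j n; fcases. Qed.

Lemma subst_E0 : subst_b_aq_q E0 = E0.
Proof. apply: fps_ext => i j n; fcases; case: i => [|i]; case: j => [|j]; case: n => [|n] //=; lia. Qed.

Lemma Tf_eq F : Tf F = fadd (subst_b_aq_q F) (sh 1 0 1 (subst_b_aq_q F)).
Proof. exact: fps_mul_opa. Qed.

Lemma Tf_add F G : Tf (fadd F G) = fadd (Tf F) (Tf G).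
Proof.
rewrite !Tf_eq subst_add sh_add; apply: fps_ext => i j n; rewrite /fadd; lia.
Qed.

Lemma Tf_sh a b m m' F : m' = m + b -> Tf (sh a b m F) = sh b a m' (Tf F).
Proof.
move=> Hm; rewrite !Tf_eq (subst_sh _ _ Hm) sh_add.
congr fadd; apply: fps_ext => i j n; fcases.
Qed.

Lemma Tf_E0 : Tf E0 = fadd E0 (sh 1 0 1 E0).
Proof. by rewrite Tf_eq subst_E0. Qed.


Definition H (r : nat) : fps := locked (Cnt (fun x => crank x <= r)).
Definition Dq (r : nat) : fps := Cn (fun x => crank x == r).
Definition K (j : nat) : fps := locked (Cnt (Rl (2 * j, Cab))).

Lemma odd2j j : odd (2 * j) = false.
Proof. by rewrite oddM. Qed.

Ltac allowed := let k := fresh "k" in let c := fresh "c" in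
  move=> [k c]; rewrite /good /Rl /Adiff /= ?oddD ?odd2j /= ?addbF ?addbb ?addbT ?addbb /=;
  case: c => /=; lia.

Lemma A1 j x : good x -> Rl (2 * j, Ca) x = Rl (2 * j, Cab) x.
Proof. move: x; allowed. Qed.
Lemma A2 j x : good x -> Rl (2 * j + 1, Ca2) x = Rl (2 * j, Cab) x.
Proof. move: x; allowed. Qed.
Lemma A3 j x : 1 <= j -> good x ->
  Rl (2 * j + 2, Cab) x = (crank x <= 8 * j - 3) || (crank x == 8 * j - 1).
Proof. move=> Hj; move: x; allowed. Qed.
Lemma A4 j x : 1 <= j -> good x -> Rl (2 * j, Cb) x = (crank x <= 8 * j - 7).
Proof. move=> Hj; move: x; allowed. Qed.
Lemma A5 j x : 1 <= j -> good x -> Rl (2 * j + 1, Cab) x = (crank x <= 8 * j - 7).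
Proof. move=> Hj; move: x; allowed. Qed.
Lemma A6 j x : 1 <= j -> good x -> Rl (2 * j + 1, Ca) x = (crank x <= 8 * j - 4).
Proof. move=> Hj; move: x; allowed. Qed.
Lemma A7 j x : 1 <= j -> good x -> Rl (2 * j + 1, Cb2) x = (crank x <= 8 * j - 7).
Proof. move=> Hj; move: x; allowed. Qed.
Lemma A8 j x : 1 <= j -> good x -> Rl (2 * j + 1, Cb) x = (crank x <= 8 * j - 3).
Proof. move=> Hj; move: x; allowed. Qed.
Lemma A9a x : good x -> Rl (1, Ca) x = false.
Proof. move: x; allowed. Qed.
Lemma A9b x : good x -> Rl (1, Cb) x = false.
Proof. move: x; allowed. Qed.
Lemma A9c x : good x -> Rl (2, Cab) x = false.
Proof. move: x; allowed. Qed.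

Lemma good_crank x : good x -> (1 <= crank x) && (crank x != 2).
Proof. move: x => [k c]; rewrite /good; case: c => /=; lia. Qed.

Lemma fadd_assoc F G L : fadd F (fadd G L) = fadd (fadd F G) L.
Proof. apply: fps_ext => i j n; rewrite /fadd; lia. Qed.

Lemma H_step r s : s = r.+1 -> H s = fadd (H r) (Dq s).
Proof.
move=> Hs; rewrite /H /Dq -!lock !Cnt_split -fadd_assoc -Cn_or.
  congr fadd; apply: Cn_ext => x _; lia.
move=> x _; lia.
Qed.

Lemma H_step2 r t s : t = r.+1 -> s = t.+1 -> H s = fadd (fadd (H r) (Dq t)) (Dq s).
Proof. by move=> Ht Hs; rewrite (H_step Hs) (H_step Ht). Qed.

Lemma H0 : H 0 = E0.
Proof. rewrite /H -lock; apply: Cnt_false => x /good_crank; lia. Qed.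

Lemma Dq2 : Dq 2 = fzero.
Proof. apply: Cn_false => x /good_crank; lia. Qed.

Lemma Dq_at l r : good l -> crank l = r -> Dq r = sh (ua l.2) (vb l.2) l.1 (Cnt (Rl l)).
Proof. by move=> Gl <-; rewrite /Dq Dq_formula. Qed.

Section J.
Variable j : nat.
Hypothesis hj : 1 <= j.

Lemma D1 : Dq (8 * j - 4) = sh 1 1 (2 * j) (K j).
Proof. rewrite (@Dq_at (2 * j, Cab)) /= /good /=; try lia. by rewrite /K -lock. Qed.
Lemma D2 : Dq (8 * j - 3) = sh 1 0 (2 * j) (K j).
Proof.
rewrite (@Dq_at (2 * j, Ca)) /= /good /=; try lia.
by rewrite /K -lock; congr sh; apply: Cnt_ext => x Gx; rewrite A1.
Qed.
Lemma D3 : Dq (8 * j - 2) = sh 2 0 (2 * j + 1) (K j).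
Proof.
rewrite (@Dq_at (2 * j + 1, Ca2)) /= /good /=; try lia.
by rewrite /K -lock; congr sh; apply: Cnt_ext => x Gx; rewrite A2.
Qed.
Lemma D4 : Dq (8 * j - 1) = sh 0 1 (2 * j) (H (8 * j - 7)).
Proof.
rewrite (@Dq_at (2 * j, Cb)) /= /good /=; try lia.
by rewrite /H -lock; congr sh; apply: Cnt_ext => x Gx; rewrite A4.
Qed.
Lemma D5 : Dq (8 * j) = sh 1 1 (2 * j + 1) (H (8 * j - 7)).
Proof.
rewrite (@Dq_at (2 * j + 1, Cab)) /= /good /=; try lia.
by rewrite /H -lock; congr sh; apply: Cnt_ext => x Gx; rewrite A5.
Qed.
Lemma D6 : Dq (8 * j + 1) = sh 1 0 (2 * j + 1) (H (8 * j - 4)).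
Proof.
rewrite (@Dq_at (2 * j + 1, Ca)) /= /good /=; try lia.
by rewrite /H -lock; congr sh; apply: Cnt_ext => x Gx; rewrite A6.
Qed.
Lemma D7 : Dq (8 * j + 2) = sh 0 2 (2 * j + 1) (H (8 * j - 7)).
Proof.
rewrite (@Dq_at (2 * j + 1, Cb2)) /= /good /=; try lia.
by rewrite /H -lock; congr sh; apply: Cnt_ext => x Gx; rewrite A7.
Qed.
Lemma D8 : Dq (8 * j + 3) = sh 0 1 (2 * j + 1) (H (8 * j - 3)).
Proof.
rewrite (@Dq_at (2 * j + 1, Cb)) /= /good /=; try lia.
by rewrite /H -lock; congr sh; apply: Cnt_ext => x Gx; rewrite A8.
Qed.
Lemma Kstep : K (j + 1) = fadd (H (8 * j - 3)) (Dq (8 * j - 1)).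
Proof.
rewrite /K /H /Dq -!lock (_ : 2 * (j + 1) = 2 * j + 2); last lia.
rewrite (Cnt_ext (P' := fun x => (crank x <= 8 * j - 3) || (crank x == 8 * j - 1))).
  rewrite !Cnt_split Cn_or ?fadd_assoc //.
  move=> x _; lia.
by move=> x Gx; rewrite A3.
Qed.
End J.

Lemma K1 : K 1 = E0.
Proof. rewrite /K -lock; apply: Cnt_false => x Gx; exact: A9c. Qed.
Lemma Dq1 : Dq 1 = sh 1 0 1 E0.
Proof. rewrite (@Dq_at (1, Ca)) //=; congr sh; apply: Cnt_false => x Gx; exact: A9a. Qed.
Lemma Dq3 : Dq 3 = sh 0 1 1 E0.
Proof. rewrite (@Dq_at (1, Cb)) //=; congr sh; apply: Cnt_false => x Gx; exact: A9b. Qed.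


Ltac fac := apply: fps_ext => ? ? ?; rewrite /fadd /fzero; lia.

Lemma sh_sh' a b m a' b' m' a'' b'' m'' F : a'' = a + a' -> b'' = b + b' -> m'' = m + m' ->
  sh a b m (sh a' b' m' F) = sh a'' b'' m'' F.
Proof. exact: sh_sh. Qed.

Lemma GH kx : G kx = H (crank kx).
Proof. by rewrite /H -lock. Qed.

Lemma H1 : H 1 = fadd E0 (sh 1 0 1 E0).
Proof. by rewrite (@H_step 0 1) // H0 Dq1. Qed.

Lemma H3 : H 3 = fadd (H 1) (sh 0 1 1 E0).
Proof. rewrite (@H_step2 1 2 3) // Dq2 Dq3; fac. Qed.

Lemma E4 : H 4 = Tf (H 1).
Proof.
rewrite (@H_step 3 4) // H3 (D1 (leqnn 1)) K1 H1 Tf_add Tf_E0 (@Tf_sh 1 0 1 1) // Tf_E0.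
rewrite sh_add (@sh_sh' 0 1 1 1 0 1 1 1 2) //; rewrite (_ : 2 * 1 = 2) //; fac.
Qed.

Lemma E6 : H 6 = Tf (H 3).
Proof.
rewrite (@H_step2 4 5 6) // (D2 (leqnn 1)) (D3 (leqnn 1)) K1.
rewrite H3 Tf_add -E4 (@Tf_sh 0 1 1 2) // Tf_E0 sh_add (@sh_sh' 1 0 2 1 0 1 2 0 3) //; rewrite (_ : 2 * 1 = 2) // (_ : 2 + 1 = 3) //; fac.
Qed.

Lemma Kc1 : H 1 = Tf (K 1).
Proof. by rewrite K1 Tf_E0 H1. Qed.

Section Steps.
Variable j : nat.
Hypothesis hj : 1 <= j.

Lemma S8 : H (8 * j - 2) = Tf (H (8 * j - 5)) -> H (8 * j - 7) = Tf (K j) ->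
  H (8 * j) = Tf (H (8 * j - 3)).
Proof.
move=> E6 Kc.
rewrite (@H_step2 (8 * j - 2) (8 * j - 1) (8 * j)); try lia.
rewrite (D4 hj) (D5 hj).
rewrite (@H_step2 (8 * j - 5) (8 * j - 4) (8 * j - 3)); try lia.
rewrite (D1 hj) (D2 hj) !Tf_add (@Tf_sh 1 1 (2 * j) (2 * j + 1)); last lia.
rewrite (@Tf_sh 1 0 (2 * j) (2 * j)); last lia.
rewrite -E6 -Kc; fac.
Qed.

Lemma S10 : H (8 * j) = Tf (H (8 * j - 3)) -> H (8 * j - 4) = Tf (H (8 * j - 7)) ->
  H (8 * j - 7) = Tf (K j) -> H (8 * j + 2) = Tf (H (8 * j - 1)).
Proof.
move=> E8 E4 Kc.
rewrite (@H_step2 (8 * j) (8 * j + 1) (8 * j + 2)); try lia.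
rewrite (D6 hj) (D7 hj).
rewrite (@H_step2 (8 * j - 3) (8 * j - 2) (8 * j - 1)); try lia.
rewrite (D3 hj) (D4 hj) !Tf_add (@Tf_sh 2 0 (2 * j + 1) (2 * j + 1)); last lia.
rewrite (@Tf_sh 0 1 (2 * j) (2 * j + 1)); last lia.
rewrite -E8 -Kc -E4; fac.
Qed.

Lemma T4 : H (8 * j - 2) = Tf (H (8 * j - 5)) -> H (8 * j - 7) = Tf (K j) ->
  Tf (H (8 * j - 4)) = fadd (fadd (fadd (H (8 * j - 4)) (sh 1 0 (2 * j) (K j)))
     (sh 2 0 (2 * j + 1) (K j))) (sh 1 1 (2 * j + 1) (H (8 * j - 7))).
Proof.
move=> E6 Kc.
rewrite {1}(@H_step (8 * j - 5) (8 * j - 4)); last lia.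
rewrite (D1 hj) Tf_add (@Tf_sh 1 1 (2 * j) (2 * j + 1)); last lia.
rewrite -E6 -Kc (@H_step2 (8 * j - 4) (8 * j - 3) (8 * j - 2)); try lia.
rewrite (D2 hj) (D3 hj); fac.
Qed.

End Steps.

Section Steps2.
Variable j : nat.
Hypothesis hj : 1 <= j.

Lemma D1' : Dq (8 * j + 4) = sh 1 1 (2 * j + 2) (K (j + 1)).
Proof.
have h1 : 1 <= j + 1 by lia.
have E1 : 8 * j + 4 = 8 * (j + 1) - 4 by lia.
have E2 : 2 * j + 2 = 2 * (j + 1) by lia.
rewrite E1 E2; exact: D1 h1.
Qed.
Lemma D2' : Dq (8 * j + 5) = sh 1 0 (2 * j + 2) (K (j + 1)).
Proof.
have h1 : 1 <= j + 1 by lia.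
have E1 : 8 * j + 5 = 8 * (j + 1) - 3 by lia.
have E2 : 2 * j + 2 = 2 * (j + 1) by lia.
rewrite E1 E2; exact: D2 h1.
Qed.
Lemma D3' : Dq (8 * j + 6) = sh 2 0 (2 * j + 3) (K (j + 1)).
Proof.
have h1 : 1 <= j + 1 by lia.
have E1 : 8 * j + 6 = 8 * (j + 1) - 2 by lia.
have E2 : 2 * j + 3 = 2 * (j + 1) + 1 by lia.
rewrite E1 E2; exact: D3 h1.
Qed.

Lemma Kfull : K (j + 1) = fadd (fadd (H (8 * j - 4)) (sh 1 0 (2 * j) (K j)))
   (sh 0 1 (2 * j) (H (8 * j - 7))).
Proof.
rewrite (Kstep hj) (D4 hj) (@H_step (8 * j - 4) (8 * j - 3)); last lia.
by rewrite (D2 hj).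
Qed.

Lemma S12 : H (8 * j + 2) = Tf (H (8 * j - 1)) -> H (8 * j - 2) = Tf (H (8 * j - 5)) ->
  H (8 * j - 4) = Tf (H (8 * j - 7)) -> H (8 * j - 7) = Tf (K j) ->
  H (8 * j + 4) = Tf (H (8 * j + 1)).
Proof.
move=> E10 E6 E4 Kc.
have T := T4 hj E6 Kc.
rewrite (@H_step2 (8 * j + 2) (8 * j + 3) (8 * j + 4)); try lia.
rewrite D8 // D1' Kfull (@H_step (8 * j - 4) (8 * j - 3)); last lia.
rewrite (D2 hj).
rewrite (@H_step2 (8 * j - 1) (8 * j) (8 * j + 1)); try lia.
rewrite (D5 hj) (D6 hj) !Tf_add (@Tf_sh 1 1 (2 * j + 1) (2 * j + 2)); last lia.
rewrite (@Tf_sh 1 0 (2 * j + 1) (2 * j + 1)); last lia.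
rewrite -E10 -E4 T !sh_add.
rewrite (@sh_sh' 0 1 (2 * j + 1) 1 0 (2 * j) 1 1 (4 * j + 1)); [|lia..].
rewrite (@sh_sh' 1 1 (2 * j + 2) 1 0 (2 * j) 2 1 (4 * j + 2)); [|lia..].
rewrite (@sh_sh' 1 1 (2 * j + 2) 0 1 (2 * j) 1 2 (4 * j + 2)); [|lia..].
rewrite (@sh_sh' 0 1 (2 * j + 1) 2 0 (2 * j + 1) 2 1 (4 * j + 2)); [|lia..].
rewrite (@sh_sh' 0 1 (2 * j + 1) 1 1 (2 * j + 1) 1 2 (4 * j + 2)); [|lia..].
fac.
Qed.


Lemma S14 : H (8 * j + 4) = Tf (H (8 * j + 1)) -> H (8 * j - 4) = Tf (H (8 * j - 7)) ->
  H (8 * j) = Tf (H (8 * j - 3)) -> H (8 * j + 6) = Tf (H (8 * j + 3)).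
Proof.
move=> E12 E4 E8.
rewrite (@H_step2 (8 * j + 4) (8 * j + 5) (8 * j + 6)); [|lia..].
rewrite D2' D3' Kfull.
rewrite (@H_step2 (8 * j + 1) (8 * j + 2) (8 * j + 3)); [|lia..].
rewrite (D7 hj) (D8 hj) !Tf_add (@Tf_sh 0 2 (2 * j + 1) (2 * j + 3)); [|lia].
rewrite (@Tf_sh 0 1 (2 * j + 1) (2 * j + 2)); [|lia].
rewrite -E12 -E4 -E8.
rewrite (@H_step2 (8 * j - 2) (8 * j - 1) (8 * j)); [|lia..].
rewrite (@H_step2 (8 * j - 4) (8 * j - 3) (8 * j - 2)); [|lia..].
rewrite (D2 hj) (D3 hj) (D4 hj) (D5 hj) !sh_add.
rewrite (@sh_sh' 1 0 (2 * j + 2) 1 0 (2 * j) 2 0 (4 * j + 2)); [|lia..].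
rewrite (@sh_sh' 1 0 (2 * j + 2) 0 1 (2 * j) 1 1 (4 * j + 2)); [|lia..].
rewrite (@sh_sh' 2 0 (2 * j + 3) 1 0 (2 * j) 3 0 (4 * j + 3)); [|lia..].
rewrite (@sh_sh' 2 0 (2 * j + 3) 0 1 (2 * j) 2 1 (4 * j + 3)); [|lia..].
rewrite (@sh_sh' 1 0 (2 * j + 2) 2 0 (2 * j + 1) 3 0 (4 * j + 3)); [|lia..].
rewrite (@sh_sh' 1 0 (2 * j + 2) 1 1 (2 * j + 1) 2 1 (4 * j + 3)); [|lia..].
fac.
Qed.

Lemma KcS : H (8 * j) = Tf (H (8 * j - 3)) -> H (8 * j - 4) = Tf (H (8 * j - 7)) ->
  H (8 * j + 1) = Tf (K (j + 1)).
Proof.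
move=> E8 E4.
rewrite (@H_step (8 * j) (8 * j + 1)); [|lia].
rewrite (D6 hj) (Kstep hj) (D4 hj) Tf_add (@Tf_sh 0 1 (2 * j) (2 * j + 1)); [|lia].
by rewrite -E8 -E4.
Qed.

End Steps2.

Definition Inv j := [/\ H (8 * j - 4) = Tf (H (8 * j - 7)), H (8 * j - 2) = Tf (H (8 * j - 5)),
  H (8 * j) = Tf (H (8 * j - 3)), H (8 * j + 2) = Tf (H (8 * j - 1))
  & H (8 * j + 4) = Tf (H (8 * j + 1)) /\ H (8 * j - 7) = Tf (K j)].

Lemma Inv1 : Inv 1.
Proof.
have h : 1 <= 1 by [].
have e8 := S8 h E6 Kc1.
have e10 := S10 h e8 E4 Kc1.
have e12 := S12 h e10 E6 E4 Kc1.
split; [exact: E4|exact: E6|exact: e8|exact: e10|split; [exact: e12|exact: Kc1]].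
Qed.

Lemma Inv_step j : 1 <= j -> Inv j -> Inv (j + 1).
Proof.
move=> hj [e4 e6 e8 e10 [e12 kc]].
have h1 : 1 <= j + 1 by lia.
have f6 := S14 hj e12 e4 e8.
have k1 := KcS hj e8 e4.
have A1 : 8 * (j + 1) - 4 = 8 * j + 4 by lia.
have A2 : 8 * (j + 1) - 7 = 8 * j + 1 by lia.
have A3 : 8 * (j + 1) - 2 = 8 * j + 6 by lia.
have A4 : 8 * (j + 1) - 5 = 8 * j + 3 by lia.
have f4 : H (8 * (j + 1) - 4) = Tf (H (8 * (j + 1) - 7)) by rewrite A1 A2.
have f6' : H (8 * (j + 1) - 2) = Tf (H (8 * (j + 1) - 5)) by rewrite A3 A4.
have k1' : H (8 * (j + 1) - 7) = Tf (K (j + 1)) by rewrite A2.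
have f8 := S8 h1 f6' k1'.
have f10 := S10 h1 f8 f4 k1'.
have f12 := S12 h1 f10 f6' f4 k1'.
split; [exact: f4|exact: f6'|exact: f8|exact: f10|split; [exact: f12|exact: k1']].
Qed.

Lemma Inv_all j : 1 <= j -> Inv j.
Proof.
elim: j => [//|j IH] hj.
case: j IH hj => [|j] IH hj; first exact: Inv1.
rewrite -addn1; apply: Inv_step => //; apply: IH; lia.
Qed.

Unset Implicit Arguments.

Theorem proposition2p1 (k : nat) (hk : 1 <= k) :
  [/\ G (2 * k + 1, Cab) = fps_mul one_plus_aq (subst_b_aq_q (G (2 * k, Ca))),
      G (2 * k + 1, Cb2) = fps_mul one_plus_aq (subst_b_aq_q (G (2 * k, Cb))),
      G (2 * k + 2, Cab) = fps_mul one_plus_aq (subst_b_aq_q (G (2 * k + 1, Ca)))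
    & G (2 * k + 1, Ca2) = fps_mul one_plus_aq (subst_b_aq_q (G (2 * k - 1, Cb)))].
Proof.
have [e4 e6 e8 e10 [e12 kc]] := Inv_all hk.
rewrite !GH.
have -> : crank (2 * k + 1, Cab) = 8 * k by rewrite /=; lia.
have -> : crank (2 * k, Ca) = 8 * k - 3 by rewrite /=; lia.
have -> : crank (2 * k + 1, Cb2) = 8 * k + 2 by rewrite /=; lia.
have -> : crank (2 * k, Cb) = 8 * k - 1 by rewrite /=; lia.
have -> : crank (2 * k + 2, Cab) = 8 * k + 4 by rewrite /=; lia.
have -> : crank (2 * k + 1, Ca) = 8 * k + 1 by rewrite /=; lia.
have -> : crank (2 * k + 1, Ca2) = 8 * k - 2 by rewrite /=; lia.
have -> : crank (2 * k - 1, Cb) = 8 * k - 5 by rewrite /=; lia.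
split; [exact: e8|exact: e10|exact: e12|exact: e6].
Qed.
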